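(* Let $D\subseteq\mathbb{R}^n$ be nonempty, convex, closed and bounded, and let $f:\mathbb{R}^n\to\mathbb{R}$ be continuously differentiable. Consider Method (CGMIS) (described in the context). Then: (i) the number of changes of the index $k$ at each stage $p$ is finite, so the sequence $\{w^p\}_{p\ge0}$ is infinite; (ii) the sequence $\{w^p\}$ has limit points, and all of them belong to $D^0$; (iii) if, in addition, $f$ is pseudo-convex on $D$, then all limit points of $\{w^p\}$ belong to $D^*$, and $\lim_{p\to\infty}f(w^p)=f^*$.
   Context: Notation: $f'(x)$ is the gradient of $f$. The problem is $\min_{x\in D}f(x)$; $f^*=\inf_{x\in D}f(x)$ and $D^*$ is its solution set. $D^0$ is the set of $x^*\in D$ with $\langle f'(x^* ),x-x^*\rangle\ge0$ for all $x\in D$. $\mu(x)=\max_{y\in D}\langle f'(x),x-y\rangle$. A differentiable $\varphi$ is pseudo-convex on $D$ if for all $x,y\in D$, $\langle\varphi'(x),y-x\rangle\ge0$ implies $\varphi(y)\ge\varphi(x)$. Method (CGMIS): Choose $w^0\in D$, $\beta\in(0,1)$, and a positive sequence $\{\delta_p\}$ with $\delta_p\to0$. Set $p=1$. (Step 0) Choose a sequence of numbers $\tau_{l,p}\in(0,1)$, $l=0,1,\dots$, with $\tau_{l,p}\to0$ as $l\to\infty$; set $k=0$, $l=0$, $x^0=w^{p-1}$, and choose $\lambda_0\in(0,\tau_{0,p}]$. (Step 1) If $\mu(x^k)<\delta_p$, set $w^p=x^k$, replace $p$ by $p+1$ and go to Step 0 (restart). Otherwise choose any $z^k\in D$ with $\langle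 f'(x^k),x^k-z^k\rangle\ge\delta_p$. (Step 2) Set $d^k=z^k-x^k$, $x^{k+1}=x^k+\lambda_k d^k$. If $f(x^{k+1})\le f(x^k)+\beta\lambda_k\langle f'(x^k),d^k\rangle$, choose any $\lambda_{k+1}\in[\lambda_k,\tau_{l,p}]$ (with $l$ unchanged). Otherwise set $\lambda'_{k+1}=\min\{\lambda_k,\tau_{l+1,p}\}$, replace $l$ by $l+1$, and choose any $\lambda_{k+1}\in(0,\lambda'_{k+1}]$. Set $k=k+1$ and go to Step 1. The iterations with a fixed value of $p$ form stage $p$. *)

(* Defs.v *)
From mathcomp Require Import ssreflect ssrfun ssrbool eqtype ssrnat seq fintype bigop.
From Stdlib Require Import Reals ClassicalEpsilon.

Set Implicit Arguments.
Unset Strict Implicit.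

Local Open Scope R_scope.

Definition vec (n : nat) := 'I_n -> R.

Definition vadd n (u v : vec n) : vec n := fun i => u i + v i.
Definition vsub n (u v : vec n) : vec n := fun i => u i - v i.
Definition vscal n (a : R) (u : vec n) : vec n := fun i => a * u i.

Definition dot n (u v : vec n) : R := \big[Rplus/0]_(i < n) (u i * v i).
Definition vnorm n (u : vec n) : R := sqrt (dot u u).

Definition vnonempty n (D : vec n -> Prop) := exists x, D x.
Definition vconvex n (D : vec n -> Prop) :=
  forall x y t, D x -> D y -> 0 <= t <= 1 -> D (vadd x (vscal t (vsub y x))).
Definition vclosed n (D : vec n -> Prop) :=
  forall x, ~ D x -> exists eps, 0 < eps /\ forall y, vnorm (vsub y x) < eps -> ~ D y.
Definition vbounded n (D : vec n -> Prop) :=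
  exists M, forall x, D x -> vnorm x <= M.

Definition is_gradient n (f : vec n -> R) (f' : vec n -> vec n) :=
  forall x eps, 0 < eps -> exists d, 0 < d /\
    forall h, vnorm h < d ->
      Rabs (f (vadd x h) - f x - dot (f' x) h) <= eps * vnorm h.

Definition vcontinuous n m (g : vec n -> vec m) :=
  forall x eps, 0 < eps -> exists d, 0 < d /\
    forall y, vnorm (vsub y x) < d -> vnorm (vsub (g y) (g x)) < eps.

Definition C1_with_gradient n (f : vec n -> R) (f' : vec n -> vec n) :=
  is_gradient f f' /\ vcontinuous f'.

Definition is_max_gap n (D : vec n -> Prop) (f' : vec n -> vec n) (x : vec n) (m : R) :=
  (exists y, D y /\ dot (f' x) (vsub x y) = m) /\
  (forall y, D y -> dot (f' x) (vsub x y) <= m).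
Definition mu n (D : vec n -> Prop) (f' : vec n -> vec n) (x : vec n) : R :=
  epsilon (inhabits 0) (is_max_gap D f' x).

Definition is_inf_on n (D : vec n -> Prop) (f : vec n -> R) (m : R) :=
  (forall x, D x -> m <= f x) /\
  (forall m', (forall x, D x -> m' <= f x) -> m' <= m).
Definition fstar n (D : vec n -> Prop) (f : vec n -> R) : R :=
  epsilon (inhabits 0) (is_inf_on D f).

Definition in_Dstar n (D : vec n -> Prop) (f : vec n -> R) (x : vec n) :=
  D x /\ forall y, D y -> f x <= f y.

Definition in_D0 n (D : vec n -> Prop) (f' : vec n -> vec n) (x : vec n) :=
  D x /\ forall y, D y -> 0 <= dot (f' x) (vsub y x).

Definition pseudo_convex_on n (D : vec n -> Prop) (phi : vec n -> R) (phi' : vec n -> vec n) :=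
  forall x y, D x -> D y -> 0 <= dot (phi' x) (vsub y x) -> phi x <= phi y.

Definition limit_point n (w : nat -> vec n) (xs : vec n) :=
  forall eps, 0 < eps -> forall N, exists p, (N <= p)%nat /\ vnorm (vsub (w p) xs) < eps.

Definition armijo_ok n (f : vec n -> R) (f' : vec n -> vec n) (beta : R)
  (x d : vec n) (lam : R) :=
  f (vadd x (vscal lam d)) <= f x + beta * lam * dot (f' x) d.

(* One stage of (CGMIS) with tolerance delta, started at w.
   tau = the sequence tau_{l,p} (l = 0,1,...), x = x^k, z = z^k, lam = lambda_k,
   l k = the value of the index l when x^k is current.
   The conditions on step k are required only while the stage is still running,
   i.e. while the stopping test mu(x^j) < delta failed for all j <= k. *)
Definition cgmis_stage n (D : vec n -> Prop) (f : vec n -> R) (f' : vec n -> vec n)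
  (beta delta : R) (w : vec n) (tau : nat -> R) (x z : nat -> vec n)
  (lam : nat -> R) (l : nat -> nat) : Prop :=
  (forall j, 0 < tau j < 1) /\ Un_cv tau 0 /\
  x O = w /\ l O = O /\ 0 < lam O <= tau O /\
  forall k, (forall j, (j <= k)%nat -> delta <= mu D f' (x j)) ->
    D (z k) /\ delta <= dot (f' (x k)) (vsub (x k) (z k)) /\
    x (S k) = vadd (x k) (vscal (lam k) (vsub (z k) (x k))) /\
    (armijo_ok f f' beta (x k) (vsub (z k) (x k)) (lam k) ->
       l (S k) = l k /\ lam k <= lam (S k) <= tau (l k)) /\
    (~ armijo_ok f f' beta (x k) (vsub (z k) (x k)) (lam k) ->
       l (S k) = S (l k) /\ 0 < lam (S k) <= Rmin (lam k) (tau (S (l k)))).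

(* A run of (CGMIS): w p = w^p; stage p (p >= 1) is described by
   tau p, x p, z p, lam p, l p, starts at w^{p-1}, and when it stops
   (first k with mu(x^k) < delta_p) we have w^p = x^k. *)
Definition cgmis_run n (D : vec n -> Prop) (f : vec n -> R) (f' : vec n -> vec n)
  (beta : R) (delta : nat -> R) (w0 : vec n) (w : nat -> vec n)
  (tau : nat -> nat -> R) (x z : nat -> nat -> vec n)
  (lam : nat -> nat -> R) (l : nat -> nat -> nat) : Prop :=
  w O = w0 /\
  forall p, (1 <= p)%nat ->
    cgmis_stage D f f' beta (delta p) (w (p - 1)%nat) (tau p) (x p) (z p) (lam p) (l p) /\
    forall k, mu D f' (x p k) < delta p ->
      (forall j, (j < k)%nat -> delta p <= mu D f' (x p j)) ->
      w p = x p k.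

(* Main.v *)
Require Import Defs.
From HB Require Import structures.
From mathcomp Require Import ssreflect ssrfun ssrbool eqtype ssrnat seq fintype bigop.
From mathcomp Require Import zify.
From Stdlib Require Import Reals ClassicalEpsilon Lra Lia Psatz Classical FunctionalExtensionality.
Local Open Scope R_scope.
Set Implicit Arguments.
Unset Strict Implicit.

Lemma Rplus_assoc' : associative Rplus. Proof. by move=> a b c; rewrite Rplus_assoc. Qed.
HB.instance Definition _ := Monoid.isComLaw.Build R 0 Rplus Rplus_assoc' Rplus_comm Rplus_0_l.



Lemma sumD n (F G : 'I_n -> R) :
  \big[Rplus/0]_(i < n) (F i + G i) = \big[Rplus/0]_(i < n) F i + \big[Rplus/0]_(i < n) G i.
Proof. by rewrite big_split. Qed.

Lemma sumN n (F : 'I_n -> R) :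
  \big[Rplus/0]_(i < n) (- F i) = - \big[Rplus/0]_(i < n) F i.
Proof.
apply: (big_ind2 (fun a b => a = - b)); first by lra.
  by move=> a b c d -> ->; lra.
by [].
Qed.

Lemma sumB n (F G : 'I_n -> R) :
  \big[Rplus/0]_(i < n) (F i - G i) = \big[Rplus/0]_(i < n) F i - \big[Rplus/0]_(i < n) G i.
Proof. by rewrite /Rminus sumD sumN. Qed.

Lemma sumZ n c (F : 'I_n -> R) :
  \big[Rplus/0]_(i < n) (c * F i) = c * \big[Rplus/0]_(i < n) F i.
Proof.
apply: (big_ind2 (fun a b => a = c * b)); first by lra.
  by move=> a b d e -> ->; lra.
by [].
Qed.

Lemma sum_le n (F G : 'I_n -> R) : (forall i, F i <= G i) ->
  \big[Rplus/0]_(i < n) F i <= \big[Rplus/0]_(i < n) G i.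
Proof.
move=> H; apply: (big_ind2 (fun a b => a <= b)); first by lra.
  by move=> a b d e ? ?; lra.
by move=> i _; apply: H.
Qed.

Lemma sum_ge0 n (F : 'I_n -> R) : (forall i, 0 <= F i) -> 0 <= \big[Rplus/0]_(i < n) F i.
Proof.
move=> H; apply: (big_ind (fun a => 0 <= a)); first by lra.
  by move=> a b ? ?; lra.
by move=> i _; apply: H.
Qed.

Lemma sum_abs n (F : 'I_n -> R) :
  Rabs (\big[Rplus/0]_(i < n) F i) <= \big[Rplus/0]_(i < n) Rabs (F i).
Proof.
apply: (big_ind2 (fun a b => Rabs a <= b)); first by rewrite Rabs_R0; lra.
  move=> a b d e ? ?; have := Rabs_triang a d; lra.
by move=> i _; lra.
Qed.

Lemma sum_const n c : \big[Rplus/0]_(i < n) c = INR n * c.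
Proof.
rewrite big_const_ord; elim: n => [|n IH]; first by rewrite /=; lra.
rewrite iterS IH S_INR; lra.
Qed.

Lemma sum_single n (F : 'I_n -> R) i : (forall j, 0 <= F j) -> F i <= \big[Rplus/0]_(j < n) F j.
Proof.
move=> H; rewrite (bigD1 i) //=.
have : 0 <= \big[Rplus/0]_(j < n | j != i) F j.
  apply: (big_ind (fun a => 0 <= a)); first by lra.
    by move=> a b ? ?; lra.
  by move=> j _; apply: H.
move=> Hs; rewrite -{1}(Rplus_0_r (F i)); apply: Rplus_le_compat_l; exact: Hs.
Qed.
Definition Kn (n : nat) := INR n + 1.
Lemma Kn_pos n : 0 < Kn n.
Proof. rewrite /Kn; have := pos_INR n; lra. Qed.

Lemma dot_ge0 n (u : vec n) : 0 <= dot u u.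
Proof. apply: sum_ge0 => i; nra. Qed.

Lemma vnorm_ge0 n (u : vec n) : 0 <= vnorm u.
Proof. apply: sqrt_pos. Qed.

Lemma coord_le_norm n (u : vec n) i : Rabs (u i) <= vnorm u.
Proof.
rewrite -sqrt_Rsqr_abs /vnorm; apply: sqrt_le_1_alt.
rewrite /Rsqr /dot; apply: (@sum_single n (fun j => u j * u j) i) => j; nra.
Qed.

Lemma norm_le_coord n (u : vec n) c : 0 <= c -> (forall i, Rabs (u i) <= c) ->
  vnorm u <= Kn n * c.
Proof.
move=> c0 H; rewrite /vnorm.
have hK := Kn_pos n.
rewrite -(sqrt_Rsqr (Kn n * c)); last by nra.
apply: sqrt_le_1_alt.
apply: (Rle_trans _ (\big[Rplus/0]_(i < n) (c * c))).
  apply: sum_le => i.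
  have h : u i * u i = Rabs (u i) * Rabs (u i).
    by rewrite -Rabs_mult Rabs_right //; nra.
  rewrite h; have := H i; have := Rabs_pos (u i); nra.
rewrite sum_const /Rsqr /Kn; have := pos_INR n; nra.
Qed.

Lemma dot_bound n (u v : vec n) : Rabs (dot u v) <= INR n * (vnorm u * vnorm v).
Proof.
rewrite /dot; apply: (Rle_trans _ _ _ (sum_abs _)).
rewrite -sum_const; apply: sum_le => i.
rewrite Rabs_mult; apply: Rmult_le_compat; try apply: Rabs_pos; apply: coord_le_norm.
Qed.

Lemma vsub_sym_norm n (u v : vec n) : vnorm (vsub u v) = vnorm (vsub v u).
Proof.
rewrite /vnorm /dot; congr sqrt; apply: eq_bigr => i _; rewrite /vsub; ring.
Qed.

Lemma dot_subr n (a u v : vec n) : dot a (vsub u v) = dot a u - dot a v.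
Proof. rewrite /dot -sumB; apply: eq_bigr => i _; rewrite /vsub; ring. Qed.

Lemma dot_subl n (a b u : vec n) : dot (vsub a b) u = dot a u - dot b u.
Proof. rewrite /dot -sumB; apply: eq_bigr => i _; rewrite /vsub; ring. Qed.

Lemma dot_addr n (a u v : vec n) : dot a (vadd u v) = dot a u + dot a v.
Proof. rewrite /dot -sumD; apply: eq_bigr => i _; rewrite /vadd; ring. Qed.

Lemma dot_scalr n (a u : vec n) c : dot a (vscal c u) = c * dot a u.
Proof. rewrite /dot -sumZ; apply: eq_bigr => i _; rewrite /vscal; ring. Qed.

Lemma dot_small n (a b : vec n) al be : vnorm a <= al -> vnorm b <= be ->
  Rabs (dot a b) <= INR n * (al * be).
Proof.
move=> ha hb; apply: (Rle_trans _ _ _ (dot_bound a b)).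
have := pos_INR n; have := vnorm_ge0 a; have := vnorm_ge0 b.
move=> h1 h2 h3; apply: Rmult_le_compat_l => //; apply: Rmult_le_compat => //.
Qed.

Lemma norm_triang n (u v : vec n) : vnorm (vadd u v) <= Kn n * (vnorm u + vnorm v).
Proof.
apply: norm_le_coord; first by have := vnorm_ge0 u; have := vnorm_ge0 v; lra.
move=> i; rewrite /vadd; apply: (Rle_trans _ _ _ (Rabs_triang _ _)).
have := coord_le_norm u i; have := coord_le_norm v i; lra.
Qed.

Lemma bounded_M n (D : vec n -> Prop) : vnonempty D -> vbounded D ->
  exists M, 0 <= M /\ forall x, D x -> vnorm x <= M.
Proof.
move=> [x0 Hx0] [M HM]; exists M; split => //.
apply: Rle_trans (HM _ Hx0); apply: vnorm_ge0.
Qed.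

Lemma diam_bound n (D : vec n -> Prop) M : (forall x, D x -> vnorm x <= M) ->
  forall x y, D x -> D y -> vnorm (vsub x y) <= Kn n * (2 * M).
Proof.
move=> HM x y hx hy.
have hM : 0 <= M by apply: Rle_trans (HM _ hx); apply: vnorm_ge0.
apply: norm_le_coord; first lra.
move=> i; rewrite /vsub; apply: (Rle_trans _ _ _ (Rabs_triang _ _)).
rewrite Rabs_Ropp.
have := coord_le_norm x i; have := coord_le_norm y i; have := HM _ hx; have := HM _ hy; lra.
Qed.

Lemma vec_ext n (u v : vec n) : (forall i, u i = v i) -> u = v.
Proof. move=> H; apply: functional_extensionality => i; apply: H. Qed.

Lemma f_cont n (f : vec n -> R) f' : is_gradient f f' ->
  forall x eps, 0 < eps -> exists d, 0 < d /\
    forall y, vnorm (vsub y x) < d -> Rabs (f y - f x) < eps.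
Proof.
move=> Hg x eps he.
have [d1 [hd1 H1]] := Hg x 1 Rlt_0_1.
set C := 1 + INR n * vnorm (f' x).
have hC : 0 < C by rewrite /C; have := pos_INR n; have := vnorm_ge0 (f' x); nra.
exists (Rmin d1 (eps / C)); split.
  apply: Rmin_glb_lt => //; apply: Rdiv_lt_0_compat => //.
move=> y hy.
have hy1 : vnorm (vsub y x) < d1 by apply: Rlt_le_trans hy (Rmin_l _ _).
have hy2 : vnorm (vsub y x) < eps / C by apply: Rlt_le_trans hy (Rmin_r _ _).
have := H1 _ hy1.
have -> : vadd x (vsub y x) = y by apply: vec_ext => i; rewrite /vadd /vsub; ring.
move=> h.
have hb := dot_bound (f' x) (vsub y x).
have h0 := vnorm_ge0 (vsub y x).
have hC2 : C * vnorm (vsub y x) < eps.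
  have := Rmult_lt_compat_l C _ _ hC hy2.
  by rewrite /Rdiv -Rmult_assoc (Rmult_comm C eps) Rmult_assoc Rinv_r; lra.
have := Rabs_triang (f y - f x - dot (f' x) (vsub y x)) (dot (f' x) (vsub y x)).
rewrite /C in hC2.
have -> : f y - f x - dot (f' x) (vsub y x) + dot (f' x) (vsub y x) = f y - f x by ring.
nra.
Qed.

Lemma deriv_line n (f : vec n -> R) f' : is_gradient f f' ->
  forall x d t, derivable_pt_lim (fun t => f (vadd x (vscal t d))) t
                   (dot (f' (vadd x (vscal t d))) d).
Proof.
move=> Hg x d t eps he.
set y := vadd x (vscal t d).
set B := Kn n * vnorm d + 1.
have hB : 0 < B by rewrite /B; have := Kn_pos n; have := vnorm_ge0 d; nra.
have [d1 [hd1 H1]] := Hg y (eps / (2 * B)) ltac:(apply: Rdiv_lt_0_compat; lra).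
have hd2 : 0 < d1 / B by apply: Rdiv_lt_0_compat.
exists (mkposreal _ hd2) => h hh0 hh /=.
rewrite /= in hh.
have -> : vadd x (vscal (t + h) d) = vadd y (vscal h d).
  by apply: vec_ext => i; rewrite /y /vadd /vscal; ring.
have hnh : vnorm (vscal h d) <= Kn n * (Rabs h * vnorm d).
  apply: norm_le_coord; first by have := Rabs_pos h; have := vnorm_ge0 d; nra.
  move=> i; rewrite /vscal Rabs_mult; apply: Rmult_le_compat_l; first exact: Rabs_pos.
  exact: coord_le_norm.
have hah : 0 < Rabs h by apply: Rabs_pos_lt.
have hnh2 : vnorm (vscal h d) <= Rabs h * B.
  rewrite /B; have := Kn_pos n; have := vnorm_ge0 d; nra.
have hlt : vnorm (vscal h d) < d1.
  have : Rabs h * B < d1 / B * B by apply: Rmult_lt_compat_r.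
  rewrite /Rdiv Rmult_assoc Rinv_l; lra.
have := H1 _ hlt; rewrite dot_scalr => H2.
have hE : eps / (2 * B) * vnorm (vscal h d) <= eps / 2 * Rabs h.
  have -> : eps / 2 * Rabs h = eps / (2 * B) * (Rabs h * B).
    by field; lra.
  apply: Rmult_le_compat_l => //; apply: Rlt_le; apply: Rdiv_lt_0_compat; lra.
have -> : (f (vadd y (vscal h d)) - f y) / h - dot (f' y) d =
          (f (vadd y (vscal h d)) - f y - h * dot (f' y) d) / h by field.
rewrite /Rdiv Rabs_mult Rabs_inv.
apply: (Rmult_lt_reg_r (Rabs h)) => //.
rewrite Rmult_assoc Rinv_l; last lra.
have : eps / 2 * Rabs h < eps * Rabs h by nra.
lra.
Qed.

Lemma mvt_line n (f : vec n -> R) f' : is_gradient f f' ->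
  forall x d lam, 0 < lam -> exists th, 0 < th < lam /\
    f (vadd x (vscal lam d)) - f x = lam * dot (f' (vadd x (vscal th d))) d.
Proof.
move=> Hg x d lam hl.
have [c [Hc1 Hc2]] := MVT_cor2 (fun t => f (vadd x (vscal t d)))
   (fun t => dot (f' (vadd x (vscal t d))) d) 0 lam hl
   (fun c _ => deriv_line Hg x d c).
exists c; split => //.
have E : vadd x (vscal 0 d) = x by apply: vec_ext => i; rewrite /vadd /vscal; ring.
rewrite E in Hc1; rewrite Hc1; ring.
Qed.

Lemma choose_seq (A : Type) (P : nat -> A -> Prop) :
  (forall k, exists a, P k a) -> exists u : nat -> A, forall k, P k (u k).
Proof.
move=> H; exists (fun k => proj1_sig (constructive_indefinite_description _ (H k))).
move=> k; exact: proj2_sig (constructive_indefinite_description _ (H k)).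
Qed.

Definition incr (phi : nat -> nat) := forall k, (phi k < phi k.+1)%nat.

Lemma incr_ge phi : incr phi -> forall k, (k <= phi k)%nat.
Proof.
move=> H; elim=> [|k IH] //; have := H k; lia.
Qed.

Lemma incr_mono phi : incr phi -> forall a b, (a <= b)%nat -> (phi a <= phi b)%nat.
Proof.
move=> H a b; elim: b => [|b IH]; first by rewrite leqn0 => /eqP ->.
rewrite leq_eqVlt => /orP [/eqP -> //|hab].
have := IH hab; have := H b; lia.
Qed.

Lemma incr_comp phi psi : incr phi -> incr psi -> incr (fun k => phi (psi k)).
Proof.
move=> H1 H2 k /=; have := incr_mono H1 (H2 k).
have := H1 (psi k); lia.
Qed.

Lemma small_inv eps : 0 < eps -> exists N, forall k, (N <= k)%nat -> / (INR k + 1) < eps.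
Proof.
move=> he; have [N [HN HN0]] := archimed_cor1 eps he.
exists N => k hk.
have hN : 0 < INR N by apply: lt_0_INR; lia.
have hk' : INR N <= INR k + 1.
  have : (N <= k)%coq_nat by apply/leP.
  move=> /le_INR; lra.
apply: Rle_lt_trans HN.
apply: Rinv_le_contravar => //.
Qed.

Lemma Rabs_bound x M : Rabs x <= M -> -M <= x <= M.
Proof. move=> h; have := Rle_abs x; have := Rle_abs (- x); rewrite Rabs_Ropp; lra. Qed.

Lemma real_subseq (v : nat -> R) M : (forall k, Rabs (v k) <= M) ->
  exists phi l, incr phi /\ forall eps, 0 < eps -> exists N, forall k, (N <= k)%nat ->
    Rabs (v (phi k) - l) < eps.
Proof.
move=> HM.
have [l Hl] := Bolzano_Weierstrass v (fun c => -M <= c <= M) (compact_P3 (-M) M)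
  (fun k => Rabs_bound (HM k)).
have Hsel : forall N : nat, exists g : nat -> nat, forall k,
    (N <= g k)%nat /\ Rabs (v (g k) - l) < / (INR k + 1).
  move=> N; apply: (@choose_seq nat (fun k p => (N <= p)%nat /\ Rabs (v p - l) < / (INR k + 1))) => k.
  have hp : 0 < / (INR k + 1) by apply: Rinv_0_lt_compat; have := pos_INR k; lra.
  have [p [hp1 hp2]] := Hl (disc l (mkposreal _ hp)) N
     (ex_intro _ (mkposreal _ hp) (fun y h => h)).
  exists p; split; first by apply/leP.
  exact: hp2.
have [sel Hs] := choose_seq Hsel.
pose phi := fix phi k := match k with 0 => sel 0%nat 0%nat | S k' => sel (S (phi k')) (S k') end.
exists phi, l; split.
  by move=> k /=; have := (Hs (phi k).+1 k.+1).1.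
move=> eps he; have [N HN] := small_inv he.
exists N => k hk; apply: Rlt_trans (HN k hk).
by case: k hk => [|k] hk /=; [exact: (Hs 0%nat 0%nat).2 | exact: (Hs _ _).2].
Qed.

Lemma vec_subseq_aux n (u : nat -> vec n) M : (forall k i, Rabs (u k i) <= M) ->
  forall m, (m <= n)%nat -> exists phi (l : vec n), incr phi /\
    forall eps, 0 < eps -> exists N, forall k, (N <= k)%nat ->
      forall i : 'I_n, (i < m)%nat -> Rabs (u (phi k) i - l i) < eps.
Proof.
move=> HM; elim=> [|m IH] hm.
  exists (fun k : nat => k), (fun _ => 0); split; first by move=> k /=.
  by move=> eps he; exists 0%nat => k _ i.
have [phi [l [Hphi Hl]]] := IH (ltnW hm).
set j : 'I_n := Ordinal hm.
have [psi [l0 [Hpsi Hl0]]] := real_subseq (fun k => HM (phi k) j).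
exists (fun k => phi (psi k)), (fun i => if (nat_of_ord i == m)%nat then l0 else l i).
split; first exact: incr_comp.
move=> eps he.
have [N1 HN1] := Hl eps he; have [N2 HN2] := Hl0 eps he.
exists (maxn N1 N2) => k hk i hi.
case: eqP => [him|him].
  have -> : i = j by apply: val_inj; rewrite /= him.
  by apply: HN2; lia.
apply: HN1; last by lia.
have := incr_ge Hpsi k; lia.
Qed.

Lemma compact_cluster n (D : vec n -> Prop) (u : nat -> vec n) :
  vbounded D -> (forall p, D (u p)) -> exists xs, limit_point u xs.
Proof.
move=> [M HM] Hu.
have HM' : forall k i, Rabs (u k i) <= M.
  by move=> k i; apply: Rle_trans (HM _ (Hu k)); apply: coord_le_norm.
have [phi [l [Hphi Hl]]] := vec_subseq_aux HM' (leqnn n).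
exists l => eps he N.
have he2 : 0 < eps / (2 * Kn n) by apply: Rdiv_lt_0_compat; have := Kn_pos n; lra.
have [N1 HN1] := Hl _ he2.
exists (phi (maxn N N1)); split.
  by have := incr_ge Hphi (maxn N N1); lia.
apply: Rle_lt_trans (norm_le_coord (c := eps / (2 * Kn n)) _ _) _.
- lra.
- move=> i; apply: Rlt_le; rewrite /vsub; apply: HN1 => //; lia.
- have := Kn_pos n => hK.
  have -> : Kn n * (eps / (2 * Kn n)) = eps / 2 by field; lra.
  lra.
Qed.

Lemma cluster_in n (D : vec n -> Prop) (u : nat -> vec n) xs :
  vclosed D -> (forall p, D (u p)) -> limit_point u xs -> D xs.
Proof.
move=> Hcl Hu Hxs; apply: NNPP => hn.
have [e [he H]] := Hcl _ hn.
have [p [_ hp]] := Hxs e he 0%nat.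
exact: H _ hp (Hu p).
Qed.

Definition pcont n (g : vec n -> R) :=
  forall y0 eps, 0 < eps -> exists d, 0 < d /\
    forall y, vnorm (vsub y y0) < d -> Rabs (g y - g y0) < eps.

Lemma cont_bounded n (D : vec n -> Prop) (g : vec n -> R) :
  vclosed D -> vbounded D -> pcont g -> exists B, forall y, D y -> g y <= B.
Proof.
move=> Hcl Hbd Hg; apply: NNPP => hnb.
have H : forall k : nat, exists y, D y /\ INR k < g y.
  move=> k; apply: NNPP => hk; apply: hnb; exists (INR k) => y hy.
  apply: Rnot_lt_le => hlt; apply: hk; by exists y.
have [u Hu] := choose_seq H.
have [ys Hys] := compact_cluster Hbd (fun p => (Hu p).1).
have [d [hd Hd]] := Hg ys 1 Rlt_0_1.
have [N HN] := INR_unbounded (g ys + 1).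
have [p [hp1 hp2]] := Hys d hd N.
have := Hd _ hp2; have := (Hu p).2.
have : INR N <= INR p by apply: le_INR; apply/leP.
move=> h1 h2 h3; have := Rle_abs (g (u p) - g ys); lra.
Qed.

Lemma argmax n (D : vec n -> Prop) (g : vec n -> R) :
  vnonempty D -> vclosed D -> vbounded D -> pcont g ->
  exists ym, D ym /\ forall y, D y -> g y <= g ym.
Proof.
move=> Hne Hcl Hbd Hg.
have [B HB] := cont_bounded Hcl Hbd Hg.
set E := fun r => exists y, D y /\ r = g y.
have hE1 : bound E by exists B => r [y [hy ->]]; exact: HB.
have hE2 : exists r, E r by case: Hne => y hy; exists (g y), y.
have [s [Hs1 Hs2]] := completeness _ hE1 hE2.
have H : forall k : nat, exists y, D y /\ s - / (INR k + 1) < g y.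
  move=> k; apply: NNPP => hk.
  have hp : 0 < / (INR k + 1) by apply: Rinv_0_lt_compat; have := pos_INR k; lra.
  have : s <= s - / (INR k + 1).
    apply: Hs2 => r [y [hy ->]]; apply: Rnot_lt_le => hlt; apply: hk; by exists y.
  lra.
have [u Hu] := choose_seq H.
have [ys Hys] := compact_cluster Hbd (fun p => (Hu p).1).
have hys : D ys := cluster_in Hcl (fun p => (Hu p).1) Hys.
exists ys; split => //.
have hs : s <= g ys.
  apply: Rnot_lt_le => hlt.
  have hgap : 0 < (s - g ys) / 2 by lra.
  have [d [hd Hd]] := Hg ys _ hgap.
  have [N HN] := small_inv hgap.
  have [p [hp1 hp2]] := Hys d hd N.
  have := Hd _ hp2; have := (Hu p).2; have := HN p hp1.
  move=> h1 h2 h3; have := Rle_abs (g (u p) - g ys); lra.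
move=> y hy; apply: Rle_trans hs; apply: Hs1; by exists y.
Qed.

Lemma lin_pcont n (a x : vec n) : pcont (fun y => dot a (vsub x y)).
Proof.
move=> y0 eps he.
set C := INR n * vnorm a + 1.
have hC : 0 < C by rewrite /C; have := pos_INR n; have := vnorm_ge0 a; nra.
exists (eps / C); split; first by apply: Rdiv_lt_0_compat.
move=> y hy.
have -> : dot a (vsub x y) - dot a (vsub x y0) = - dot a (vsub y y0).
  rewrite !dot_subr; ring.
rewrite Rabs_Ropp.
apply: Rle_lt_trans (dot_small (Rle_refl _) (Rle_refl _)) _.
have h0 := vnorm_ge0 (vsub y y0); have h1 := vnorm_ge0 a; have h2 := pos_INR n.
have : C * vnorm (vsub y y0) < eps.
  have := Rmult_lt_compat_l C _ _ hC hy.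
  have -> : C * (eps / C) = eps by field; lra.
  done.
rewrite /C; nra.
Qed.

Lemma mu_spec n (D : vec n -> Prop) f' x :
  vnonempty D -> vclosed D -> vbounded D -> is_max_gap D f' x (mu D f' x).
Proof.
move=> Hne Hcl Hbd.
have [ym [hym Hym]] := argmax Hne Hcl Hbd (lin_pcont (f' x) x).
rewrite /mu; apply: epsilon_spec.
exists (dot (f' x) (vsub x ym)); split; first by exists ym.
exact: Hym.
Qed.

Lemma stage_inD n (D : vec n -> Prop) f f' beta delta w tau x z lam l :
  cgmis_stage D f f' beta delta w tau x z lam l -> vconvex D -> D w ->
  forall k, (forall j, (j < k)%nat -> delta <= mu D f' (x j)) ->
    D (x k) /\ 0 < lam k /\ lam k <= tau (l k).
Proof.
move=> [Htau [Htcv [Hx0 [Hl0 [Hlam0 Hstep]]]]] Hcvx Hw.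
elim=> [|k IH] H.
  by rewrite Hx0 Hl0; split => //; lra.
have [hD [hl1 hl2]] := IH (fun j hj => H j (ltnW hj)).
have [Dz [_ [hx [Ha Hna]]]] := Hstep k (fun j hj => H j hj).
have ht := Htau (l k).
split.
  rewrite hx; apply: Hcvx => //; lra.
case: (classic (armijo_ok f f' beta (x k) (vsub (z k) (x k)) (lam k))) => ha.
  have [-> hh] := Ha ha; lra.
have [-> [hh1 hh2]] := Hna ha; split => //.
apply: Rle_trans hh2 (Rmin_r _ _).
Qed.

Lemma nat_mono (g : nat -> nat) : (forall k, (g k <= g k.+1)%nat) ->
  forall a b, (a <= b)%nat -> (g a <= g b)%nat.
Proof.
move=> H a b; elim: b => [|b IH]; first by rewrite leqn0 => /eqP ->.
rewrite leq_eqVlt => /orP [/eqP -> //|hab].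
have := IH hab; have := H b; lia.
Qed.

Lemma stage_finite n (D : vec n -> Prop) f f' beta delta w tau x z lam l :
  vnonempty D -> vconvex D -> vclosed D -> vbounded D ->
  C1_with_gradient f f' -> 0 < beta < 1 -> 0 < delta -> D w ->
  cgmis_stage D f f' beta delta w tau x z lam l ->
  exists k, mu D f' (x k) < delta.
Proof.
move=> Hne Hcvx Hcl Hbd [Hg Hfc] Hbeta Hdelta Hw Hst.
apply: NNPP => hno.
have Hall : forall k, delta <= mu D f' (x k).
  move=> k; apply: Rnot_lt_le => h; apply: hno; by exists k.
have inD : forall k, D (x k) /\ 0 < lam k /\ lam k <= tau (l k) := fun k => @stage_inD _ _ _ _ _ _ _ _ _ _ _ _ Hst Hcvx Hw k (fun j _ => Hall j).
case: (Hst) => [Htau [Htcv [Hx0 [Hl0 [Hlam0 Hstep]]]]].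
have Hs := fun k => Hstep k (fun j _ => Hall j).
have Hdir : forall k, dot (f' (x k)) (vsub (z k) (x k)) <= - delta.
  move=> k; have [_ [hd _]] := Hs k.
  have : dot (f' (x k)) (vsub (z k) (x k)) = - dot (f' (x k)) (vsub (x k) (z k)).
    by rewrite !dot_subr; ring.
  lra.
have [M [hM0 HM]] := bounded_M Hne Hbd.
case: (classic (exists K, forall k, (K <= k)%nat ->
           armijo_ok f f' beta (x k) (vsub (z k) (x k)) (lam k))) => [[K HK]|hnot].
-
  have lam_mono : forall m, lam K <= lam (K + m)%nat.
    elim=> [|m IH]; first by rewrite addn0; lra.
    have [_ [_ [_ [Ha _]]]] := Hs (K + m)%nat.
    have [_ [hh _]] := Ha (HK _ (leq_addr _ _)).
    by rewrite addnS; lra.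
  have hlK := (inD K).2.1.
  set c := beta * lam K * delta.
  have hc : 0 < c by rewrite /c; have := Rmult_lt_0_compat _ _ (proj1 Hbeta) hlK; nra.
  have fdec : forall m, f (x (K + m)%nat) <= f (x K) - INR m * c.
    elim=> [|m IH]; first by rewrite addn0 /=; lra.
    have [_ [_ [hx _]]] := Hs (K + m)%nat.
    have ha := HK _ (leq_addr m K).
    rewrite /armijo_ok -hx in ha.
    rewrite addnS S_INR.
    have := lam_mono m; have := Hdir (K + m)%nat.
    move=> h1 h2.
    have : beta * lam (K + m)%nat * dot (f' (x (K + m)%nat)) (vsub (z (K + m)%nat) (x (K + m)%nat)) <= - c.
      rewrite /c.
      have hb := proj1 Hbeta.
      have : beta * lam K <= beta * lam (K + m)%nat by nra.
      have : 0 < beta * lam K by nra.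
      nra.
    lra.
  have Hfcont : pcont (fun y => - f y).
    move=> y0 eps he; have [d [hd Hd]] := f_cont Hg y0 he.
    exists d; split => // y hy; have := Hd y hy.
    have E : - f y - - f y0 = - (f y - f y0) by ring.
    by rewrite E Rabs_Ropp.
  have [ym [hym Hym]] := argmax Hne Hcl Hbd Hfcont.
  have [m Hm] := INR_unbounded ((f (x K) - f ym) / c).
  have := Hym _ (inD (K + m)%nat).1; have := fdec m.
  have : (f (x K) - f ym) < INR m * c.
    have := Rmult_lt_compat_r c _ _ hc Hm.
    by rewrite /Rdiv Rmult_assoc Rinv_l; lra.
  lra.
-
  have Hfail : forall K, exists k, (K <= k)%nat /\
      ~ armijo_ok f f' beta (x k) (vsub (z k) (x k)) (lam k).
    move=> K; apply: NNPP => h; apply: hnot; exists K => k hk.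
    apply: NNPP => h'; apply: h; by exists k.
  have l_mono1 : forall k, (l k <= l k.+1)%nat.
    move=> k; have [_ [_ [_ [Ha Hna]]]] := Hs k.
    case: (classic (armijo_ok f f' beta (x k) (vsub (z k) (x k)) (lam k))) => ha.
      by rewrite (Ha ha).1.
    by rewrite (Hna ha).1.
  have l_big : forall L, exists K, forall k, (K <= k)%nat -> (L <= l k)%nat.
    elim=> [|L [K HK]]; first by exists 0%nat.
    have [k [hk hna]] := Hfail K.
    have [_ [_ [_ [_ Hna]]]] := Hs k.
    exists k.+1 => k' hk'.
    have := nat_mono l_mono1 hk'; rewrite (Hna hna).1; have := HK k hk; lia.
  have lam_small : forall e, 0 < e -> exists K, forall k, (K <= k)%nat -> lam k < e.
    move=> e he; have [L HL] := Htcv e he.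
    have [K HK] := l_big L.
    exists K => k hk.
    have hLk : (l k >= L)%coq_nat by apply/leP; exact: HK.
    have := HL _ hLk; rewrite /R_dist Rminus_0_r => h.
    have := (inD k).2.2; have := Rle_abs (tau (l k)); lra.
  have [kf Hkf] := choose_seq Hfail.
  have [xb Hxb] := compact_cluster Hbd (fun i => (inD (kf i)).1).
  set Bd := Kn n * (2 * M).
  have hBd : 0 <= Bd by rewrite /Bd; have := Kn_pos n; nra.
  have Hdn : forall k, vnorm (vsub (z k) (x k)) <= Bd.
    move=> k; apply: (diam_bound HM); [exact: (Hs k).1 | exact: (inD k).1].
  set c0 := (1 - beta) * delta.
  have hc0 : 0 < c0 by rewrite /c0; nra.
  have hn := pos_INR n.
  set eta := c0 / (2 * (INR n + 1) * (Bd + 1)).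
  have heta : 0 < eta by rewrite /eta; apply: Rdiv_lt_0_compat => //; nra.
  have heta2 : 2 * INR n * (eta * Bd) < c0.
    have e1 : eta * (2 * (INR n + 1) * (Bd + 1)) = c0 by rewrite /eta; field; nra.
    nra.
  have [rho [hrho Hrho]] := Hfc xb eta heta.
  have hK := Kn_pos n.
  have hK1 : 1 <= Kn n by rewrite /Kn; lra.
  set e := rho / (2 * Kn n * (Bd + 1)).
  have he : 0 < e by rewrite /e; apply: Rdiv_lt_0_compat => //; nra.
  have [K0 HK0] := lam_small e he.
  have he2 : 0 < rho / (2 * Kn n) by apply: Rdiv_lt_0_compat => //; nra.
  have [i [hi1 hi2]] := Hxb _ he2 K0.
  set k := kf i.
  have hk : (K0 <= k)%nat by have := (Hkf i).1; rewrite -/k; lia.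
  have hna := (Hkf i).2; rewrite -/k in hna hi2.
  have hlk := HK0 _ hk.
  have [hxk [hlam _]] := inD k.
  set d := vsub (z k) (x k).
  have [th [hth Hmvt]] := mvt_line Hg (x k) d hlam.
  set xi := vadd (x k) (vscal th d).
  have hxi : vnorm (vsub xi xb) < rho.
    have hc : 0 <= vnorm (vsub (x k) xb) + th * Bd by have := vnorm_ge0 (vsub (x k) xb); nra.
    apply: Rle_lt_trans (norm_le_coord hc _) _.
      move=> j; rewrite /xi /vsub /vadd /vscal.
      have -> : x k j + th * d j - xb j = (x k j - xb j) + th * d j by ring.
      apply: (Rle_trans _ _ _ (Rabs_triang _ _)).
      have := coord_le_norm (vsub (x k) xb) j; rewrite /vsub => h1.
      rewrite Rabs_mult (Rabs_right th); last lra.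
      have := coord_le_norm d j; have := Hdn k; rewrite -/d => h2 h3.
      nra.
    have e1 : Kn n * vnorm (vsub (x k) xb) < rho / 2.
      have := Rmult_lt_compat_l (Kn n) _ _ hK hi2.
      have -> : Kn n * (rho / (2 * Kn n)) = rho / 2 by field; lra.
      done.
    have e2 : Kn n * (th * Bd) <= Kn n * (e * Bd).
      apply: Rmult_le_compat_l; first lra.
      apply: Rmult_le_compat_r => //; lra.
    have e3 : Kn n * (e * Bd) < rho / 2.
      have -> : Kn n * (e * Bd) = rho / 2 * (Bd / (Bd + 1)) by rewrite /e; field; lra.
      have : Bd / (Bd + 1) < 1.
        apply: (Rmult_lt_reg_r (Bd + 1)); first lra.
        rewrite /Rdiv Rmult_assoc Rinv_l; lra.
      have : 0 < rho / 2 by lra.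
      nra.
    have -> : Kn n * (vnorm (vsub (x k) xb) + th * Bd) =
              Kn n * vnorm (vsub (x k) xb) + Kn n * (th * Bd) by ring.
    lra.
  have hxk2 : vnorm (vsub (x k) xb) < rho.
    apply: Rlt_le_trans hi2 _.
    apply: (Rmult_le_reg_r (2 * Kn n)); first lra.
    rewrite /Rdiv Rmult_assoc Rinv_l; nra.
  have a1 := Hrho _ hxi.
  have a2 := Hrho _ hxk2.
  have b1 := dot_small (Rlt_le _ _ a1) (Hdn k).
  have b2 := dot_small (Rlt_le _ _ a2) (Hdn k).
  rewrite -/d in b1 b2.
  rewrite dot_subl in b1; rewrite dot_subl in b2.
  have := Rle_abs (dot (f' xi) d - dot (f' xb) d).
  have := Rle_abs (- (dot (f' (x k)) d - dot (f' xb) d)); rewrite Rabs_Ropp.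
  move=> b3 b4.
  rewrite /armijo_ok -/d in hna.
  have hna' := Rnot_le_lt _ _ hna.
  rewrite -/xi in Hmvt.
  have hD0 := Hdir k; rewrite -/d in hD0.
  have hg : dot (f' xi) d > beta * dot (f' (x k)) d.
    have : lam k * dot (f' xi) d > lam k * (beta * dot (f' (x k)) d) by nra.
    move=> h; apply: (Rmult_lt_reg_l (lam k)) => //; lra.
  have : (1 - beta) * delta <= dot (f' xi) d - dot (f' (x k)) d by nra.
  rewrite -/c0; lra.
Qed.

Lemma min_exists (P : nat -> Prop) : (exists k, P k) ->
  exists k, P k /\ forall j, (j < k)%nat -> ~ P j.
Proof.
move=> [k0 Hk0].
have H : forall m, (forall k, (k <= m)%nat -> P k -> exists k, P k /\ forall j, (j < k)%nat -> ~ P j).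
  elim=> [|m IH] k hk Pk.
    exists k; split => // j hj; lia.
  case: (classic (exists j, (j < k)%nat /\ P j)) => [[j [hj Pj]]|hno].
    apply: (IH j) => //; lia.
  exists k; split => // j hj Pj; apply: hno; by exists j.
exact: (H k0 k0 (leqnn _) Hk0).
Qed.

Lemma inf_unique n (D : vec n -> Prop) f a b : is_inf_on D f a -> is_inf_on D f b -> a = b.
Proof.
move=> [Ha1 Ha2] [Hb1 Hb2]; apply: Rle_antisym; [exact: Hb2 | exact: Ha2].
Qed.

Theorem theorem5p1 (n : nat) (D : vec n -> Prop) (f : vec n -> R) (f' : vec n -> vec n)
  (beta : R) (delta : nat -> R) (w0 : vec n)
  (HDne : vnonempty D) (HDcvx : vconvex D) (HDcl : vclosed D)
  (HDbd : vbounded D)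
  (Hf : C1_with_gradient f f')
  (Hw0 : D w0) (Hbeta : 0 < beta < 1)
  (Hdelta : forall p, (1 <= p)%nat -> 0 < delta p) (Hdelta0 : Un_cv delta 0)
  (w : nat -> vec n) (tau : nat -> nat -> R) (x z : nat -> nat -> vec n)
  (lam : nat -> nat -> R) (l : nat -> nat -> nat)
  (Hrun : cgmis_run D f f' beta delta w0 w tau x z lam l) :
  (* (i) every stage p >= 1 stops after finitely many changes of k *)
  (forall p, (1 <= p)%nat -> exists k, mu D f' (x p k) < delta p) /\
  (* (ii) {w^p} has limit points, all in D^0 *)
  (exists xs, limit_point w xs) /\
  (forall xs, limit_point w xs -> in_D0 D f' xs) /\
  (* (iii) under pseudo-convexity: limit points in D^*, f(w^p) -> f^* *)
  (pseudo_convex_on D f f' ->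
     (forall xs, limit_point w xs -> in_Dstar D f xs) /\
     Un_cv (fun p => f (w p)) (fstar D f)).
Proof.
case: Hrun => Hw0e Hstages.
have Hmu : forall y, is_max_gap D f' y (mu D f' y) := fun y => mu_spec f' y HDne HDcl HDbd.
have W : forall p, D (w p) /\ ((1 <= p)%nat -> mu D f' (w p) < delta p).
  elim=> [|q [IH _]]; first by rewrite Hw0e; split => //.
  have [Hst Hwp] := Hstages q.+1 (ltn0Sn q).
  rewrite subn1 /= in Hst.
  have hdq := Hdelta q.+1 (ltn0Sn q).
  have [k0 Hk0] := stage_finite HDne HDcvx HDcl HDbd Hf Hbeta hdq IH Hst.
  have [k [Hk Hkmin]] := @min_exists (fun k => mu D f' (x q.+1 k) < delta q.+1) (ex_intro _ k0 Hk0).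
  have Hk' : forall j, (j < k)%nat -> delta q.+1 <= mu D f' (x q.+1 j).
    by move=> j hj; apply: Rnot_lt_le; apply: Hkmin.
  rewrite (Hwp k Hk Hk'); split => //.
  exact: (@stage_inD _ _ _ _ _ _ _ _ _ _ _ _ Hst HDcvx IH k Hk').1.
have [M [hM0 HM]] := bounded_M HDne HDbd.
have [Hg Hfc] := Hf.
have Part1 : forall p, (1 <= p)%nat -> exists k, mu D f' (x p k) < delta p.
  move=> p hp; have [Hst _] := Hstages p hp.
  exact: stage_finite HDne HDcvx HDcl HDbd Hf Hbeta (Hdelta p hp) (W (p - 1)%nat).1 Hst.
have Part2a : exists xs, limit_point w xs := compact_cluster HDbd (fun p => (W p).1).
have Part2b : forall xs, limit_point w xs -> in_D0 D f' xs.
  move=> xs Hxs.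
  have hxs : D xs := cluster_in HDcl (fun p => (W p).1) Hxs.
  split => // y hy; apply: Rnot_lt_le => hneg.
  set c := dot (f' xs) (vsub xs y).
  have hc : 0 < c.
    have : c = - dot (f' xs) (vsub y xs) by rewrite /c !dot_subr; ring.
    lra.
  have hc2 : 0 < c / 2 by lra.
  have [N HN] := Hdelta0 _ hc2.
  set Bd := Kn n * (2 * M).
  have hBd : 0 <= Bd by rewrite /Bd; have := Kn_pos n; nra.
  have hn := pos_INR n.
  set eta1 := c / (4 * (INR n + 1) * (Bd + 1)).
  have heta1 : 0 < eta1 by rewrite /eta1; apply: Rdiv_lt_0_compat => //; nra.
  have [rho1 [hrho1 Hrho1]] := Hfc xs eta1 heta1.
  have hnf := vnorm_ge0 (f' xs).
  set rho2 := c / (4 * (INR n + 1) * (vnorm (f' xs) + 1)).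
  have hrho2 : 0 < rho2 by rewrite /rho2; apply: Rdiv_lt_0_compat => //; nra.
  have hrho : 0 < Rmin rho1 rho2 by apply: Rmin_glb_lt.
  have [p [hp1 hp2]] := Hxs _ hrho (maxn N 1).
  have hp3 : vnorm (vsub (w p) xs) < rho1 := Rlt_le_trans _ _ _ hp2 (Rmin_l _ _).
  have hp4 : vnorm (vsub (w p) xs) < rho2 := Rlt_le_trans _ _ _ hp2 (Rmin_r _ _).
  have hwp := (W p).1.
  have hmuw : mu D f' (w p) < delta p by apply: (W p).2; lia.
  have hdp : R_dist (delta p) 0 < c / 2 by apply: HN; apply/leP; lia.
  rewrite /R_dist Rminus_0_r in hdp.
  have hge := (Hmu (w p)).2 y hy.
  have Eid : dot (f' (w p)) (vsub (w p) y) - c =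
     dot (vsub (f' (w p)) (f' xs)) (vsub (w p) y) + dot (f' xs) (vsub (w p) xs).
    rewrite /c !dot_subl !dot_subr; ring.
  have b1 := dot_small (Rlt_le _ _ (Hrho1 _ hp3)) (diam_bound HM hwp hy).
  have b2 := dot_small (Rle_refl (vnorm (f' xs))) (Rlt_le _ _ hp4).
  have e1 : INR n * (eta1 * Bd) <= c / 4.
    have : eta1 * (4 * (INR n + 1) * (Bd + 1)) = c by rewrite /eta1; field; nra.
    nra.
  have e2 : INR n * (vnorm (f' xs) * rho2) <= c / 4.
    have : rho2 * (4 * (INR n + 1) * (vnorm (f' xs) + 1)) = c by rewrite /rho2; field; nra.
    nra.
  have := Rle_abs (- dot (vsub (f' (w p)) (f' xs)) (vsub (w p) y)); rewrite Rabs_Ropp.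
  have := Rle_abs (- dot (f' xs) (vsub (w p) xs)); rewrite Rabs_Ropp.
  have := Rle_abs (delta p).
  rewrite -/Bd in b1.
  move=> *; lra.
split => //; split => //; split => //.
move=> Hpc.
have Part3a : forall xs, limit_point w xs -> in_Dstar D f xs.
  move=> xs Hxs; have [hxs H0] := Part2b xs Hxs.
  split => // y hy; exact: Hpc _ _ hxs hy (H0 y hy).
have inf_of : forall xs, in_Dstar D f xs -> is_inf_on D f (f xs).
  move=> xs [hxs Hxs]; split => // m' Hm'; exact: Hm' _ hxs.
have [xs0 Hxs0] := Part2a.
have Hfs : is_inf_on D f (fstar D f).
  rewrite /fstar; apply: epsilon_spec; exists (f xs0); apply: inf_of; exact: Part3a.
split => //.
move=> eps he; apply: NNPP => hno.
have Hbad : forall N, exists p, (N <= p)%nat /\ eps <= R_dist (f (w p)) (fstar D f).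
  move=> N; apply: NNPP => h; apply: hno; exists N => p hp.
  apply: Rnot_le_lt => h'; apply: h; exists p; split => //; exact/leP.
have [ps Hps] := choose_seq Hbad.
have [xs Hxs] := compact_cluster HDbd (fun i => (W (ps i)).1).
have Hxsw : limit_point w xs.
  move=> e he' N; have [i [hi1 hi2]] := Hxs e he' N.
  exists (ps i); split => //; have := (Hps i).1; lia.
have Efs : f xs = fstar D f := inf_unique (inf_of _ (Part3a _ Hxsw)) Hfs.
have [d [hd Hd]] := f_cont Hg xs he.
have [i [_ hi]] := Hxs d hd 0%nat.
have := Hd _ hi; have := (Hps i).2; rewrite /R_dist -Efs; lra.
Qed.
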